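(* Let $\mathcal H$ be a graded connected Hopf algebra over a field $\Bbbk$ of characteristic different from $2$. Let $\varphi,\psi\colon\mathcal H\to\Bbbk$ be linear functionals with $\varphi_0=\psi_0=\epsilon$. Then: (a) There is a unique linear functional $\rho\colon\mathcal H\to\Bbbk$ such that $\varphi=\rho\psi\rho$ and $\rho_0=\epsilon$. (b) If $\varphi$ and $\psi$ are characters, then so is $\rho$. (c) If $\bar\varphi=\psi^{-1}$ then $\rho$ is even, and if $\bar\varphi=\psi$ then $\rho$ is odd.
   Context: $\mathcal H=\bigoplus_{n\ge0}\mathcal H_n$ is graded connected ($\mathcal H_0=\Bbbk\cdot1$, structure maps graded) with each $\mathcal H_n$ finite-dimensional. For a linear functional $\varphi$, $\varphi_n$ denotes its restriction to $\mathcal H_n$, and $\epsilon$ (the counit) is viewed as $\epsilon_0$. Products of linear functionals are convolution products $\varphi\psi=m_\Bbbk\circ(\varphi\otimes\psi)\circ\Delta$. A character is an algebra morphism $\mathcal H\to\Bbbk$; characters form a group under convolution with inverse $\varphi^{-1}=\varphi\circ S$. For a linear functional $\varphi$, $\bar\varphi(h)=(-1)^n\varphi(h)$ for $h\in\mathcal H_n$. A character $\rho$ is even if $\bar\rho=\rho$ and odd if $\bar\rho=\rho^{-1}$. *)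

(* Defs.v *)
From HB Require Import structures.
From mathcomp Require Import all_boot all_order all_algebra.
Set Implicit Arguments. Unset Strict Implicit. Unset Printing Implicit Defensive.
Import Order.TTheory GRing.Theory Num.Theory.
Local Open Scope ring_scope.

(* Tensors in H (x) H are represented by finite formal sums (seq of pairs).
   They are only ever evaluated against pairs of linear functionals,
   f (x) g : a (x) b |-> f a * g b, which separate points of H (x) H over a
   field; all coalgebra axioms are stated through such evaluations. *)

Section GCHopf.
Variables (k : fieldType) (H : algType k).

Definition lin_fun (f : H -> k) : Prop :=
  forall (a : k) (x y : H), f (a *: x + y) = a * f x + f y.

Definition lin_map (f : H -> H) : Prop :=
  forall (a : k) (x y : H), f (a *: x + y) = a *: f x + f y.

Definition tens (f g : H -> k) (t : seq (H * H)) : k :=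
  \sum_(p <- t) f p.1 * g p.2.

(* A graded connected Hopf algebra structure on the k-algebra H, with
   H_n = image of proj n, each H_n finite-dimensional, H = (+)_n H_n. *)
Record gc_hopf := GCHopf {
  cop : H -> seq (H * H);
  cou : H -> k;
  ant : H -> H;
  proj : nat -> H -> H;
  gbnd : H -> nat;                 (* x lies in (+)_(n < gbnd x) H_n *)
  cop_lin : forall f g, lin_fun f -> lin_fun g -> lin_fun (fun x => tens f g (cop x));
  coassoc : forall f g h x, lin_fun f -> lin_fun g -> lin_fun h ->
    \sum_(p <- cop x) tens f g (cop p.1) * h p.2 =
    \sum_(p <- cop x) f p.1 * tens g h (cop p.2);
  cou_lin : lin_fun cou;
  cou_l : forall x, \sum_(p <- cop x) cou p.1 *: p.2 = x;
  cou_r : forall x, \sum_(p <- cop x) cou p.2 *: p.1 = x;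
  cou_mul : forall x y, cou (x * y) = cou x * cou y;
  cou_one : cou 1 = 1;
  cop_mul : forall f g x y, lin_fun f -> lin_fun g ->
    tens f g (cop (x * y)) =
    \sum_(p <- cop x) \sum_(q <- cop y) f (p.1 * q.1) * g (p.2 * q.2);
  cop_one : forall f g, lin_fun f -> lin_fun g -> tens f g (cop 1) = f 1 * g 1;
  ant_lin : lin_map ant;
  ant_l : forall x, \sum_(p <- cop x) ant p.1 * p.2 = cou x *: 1;
  ant_r : forall x, \sum_(p <- cop x) p.1 * ant p.2 = cou x *: 1;
  proj_lin : forall n, lin_map (proj n);
  proj_proj : forall n m x, proj n (proj m x) = if n == m then proj n x else 0;
  gbnd_zero : forall n x, (gbnd x <= n)%N -> proj n x = 0;
  gbnd_sum : forall x, x = \sum_(n < gbnd x) proj n x;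
  proj_fin : forall n, exists s : seq H, forall x,
      exists c : nat -> k, proj n x = \sum_(i < size s) c i *: s`_i;
  proj0_one : proj 0 1 = 1;
  proj0_scal : forall x, exists c : k, proj 0 x = c *: 1;
  mul_graded : forall p q x y,
    proj (p + q) (proj p x * proj q y) = proj p x * proj q y;
  cop_graded : forall f g n x, lin_fun f -> lin_fun g ->
    tens f g (cop (proj n x)) =
    \sum_(i < n.+1) tens (f \o proj i) (g \o proj (n - i)) (cop (proj n x));
  cou_graded : forall n x, (0 < n)%N -> cou (proj n x) = 0;
  ant_graded : forall n x, ant (proj n x) = proj n (ant x)
}.

Variable S : gc_hopf.

Definition conv (f g : H -> k) : H -> k := fun x => tens f g (cop S x).

Definition restr0_is_cou (f : H -> k) : Prop :=
  forall x, f (proj S 0 x) = cou S (proj S 0 x).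

Definition character (f : H -> k) : Prop :=
  [/\ lin_fun f, f 1 = 1 & forall x y, f (x * y) = f x * f y].

Definition bar (f : H -> k) : H -> k :=
  fun x => \sum_(n < gbnd S x) (-1) ^+ n * f (proj S n x).

Definition conv_inv (f g : H -> k) : Prop :=
  forall x, conv f g x = cou S x /\ conv g f x = cou S x.

Definition even_fun (f : H -> k) : Prop := forall x, bar f x = f x.
Definition odd_fun (f : H -> k) : Prop := conv_inv f (bar f).

End GCHopf.

(* Main.v *)
Require Import Defs.
From HB Require Import structures.
From mathcomp Require Import all_boot all_order all_algebra.
From Stdlib Require Import FunctionalExtensionality.
From mathcomp Require Import ring zify.
Set Implicit Arguments. Unset Strict Implicit. Unset Printing Implicit Defensive.
Import Order.TTheory GRing.Theory Num.Theory.
Local Open Scope ring_scope.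

Section Basics.
Variables (k : fieldType) (H : algType k) (S : gc_hopf H).

Implicit Types (f g h : H -> k).

Lemma lin0 f : lin_fun f -> f 0 = 0.
Proof.
move=> lf; have := lf 1 0 0; rewrite scale1r addr0 mul1r => /eqP.
by rewrite eq_sym -subr_eq0 addrK => /eqP.
Qed.

Lemma linD f : lin_fun f -> forall x y, f (x + y) = f x + f y.
Proof. by move=> lf x y; rewrite -(scale1r x) lf mul1r scale1r. Qed.

Lemma linZ f : lin_fun f -> forall a x, f (a *: x) = a * f x.
Proof. by move=> lf a x; rewrite -(addr0 (a *: x)) lf lin0 // addr0. Qed.

Lemma linN f : lin_fun f -> forall x, f (- x) = - f x.
Proof. by move=> lf x; rewrite -scaleN1r linZ // mulN1r. Qed.

Lemma linB f : lin_fun f -> forall x y, f (x - y) = f x - f y.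
Proof. by move=> lf x y; rewrite linD // linN. Qed.

Lemma lin_sum f I (r : seq I) (P : pred I) (F : I -> H) : lin_fun f ->
  f (\sum_(i <- r | P i) F i) = \sum_(i <- r | P i) f (F i).
Proof. by move=> lf; apply: (big_morph f (linD lf) (lin0 lf)). Qed.

Lemma lin_add f g : lin_fun f -> lin_fun g -> lin_fun (fun x => f x + g x).
Proof. by move=> lf lg a x y; rewrite lf lg mulrDr; ring. Qed.

Lemma lin_sub f g : lin_fun f -> lin_fun g -> lin_fun (fun x => f x - g x).
Proof. by move=> lf lg a x y; rewrite lf lg; ring. Qed.

Lemma lin_scal f c : lin_fun f -> lin_fun (fun x => c * f x).
Proof. by move=> lf a x y; rewrite lf; ring. Qed.

Lemma lin_comp f (m : H -> H) : lin_fun f -> @lin_map k H m -> lin_fun (fun x => f (m x)).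
Proof. by move=> lf lm a x y; rewrite lm lf. Qed.

Lemma lin_bsum I (r : seq I) (F : I -> H -> k) :
  (forall i, lin_fun (F i)) -> lin_fun (fun x => \sum_(i <- r) F i x).
Proof.
move=> lF a x y; rewrite mulr_sumr -big_split /=.
by apply: eq_bigr => i _; rewrite lF.
Qed.

Lemma lin_zero : lin_fun (fun _ : H => 0 : k).
Proof. by move=> *; rewrite mulr0 addr0. Qed.

Lemma lin_cou : lin_fun (cou S). Proof. exact: cou_lin. Qed.

Lemma mlin0 m : @lin_map k H m -> m 0 = 0.
Proof.
move=> lf; have := lf 1 0 0; rewrite !scale1r addr0 => /eqP.
by rewrite eq_sym -subr_eq0 addrK => /eqP.
Qed.

Lemma mlinD m : @lin_map k H m -> forall x y, m (x + y) = m x + m y.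
Proof. by move=> lf x y; rewrite -(scale1r x) lf !scale1r. Qed.

Lemma mlin_sum m I (r : seq I) (P : pred I) (F : I -> H) : @lin_map k H m ->
  m (\sum_(i <- r | P i) F i) = \sum_(i <- r | P i) m (F i).
Proof. by move=> lf; apply: (big_morph m (mlinD lf) (mlin0 lf)). Qed.

Lemma proj0 n : proj S n 0 = 0.
Proof. exact: mlin0 (proj_lin S n). Qed.

Lemma projK n x : proj S n (proj S n x) = proj S n x.
Proof. by rewrite proj_proj eqxx. Qed.

Lemma projO n m x : n != m -> proj S n (proj S m x) = 0.
Proof. by move=> /negbTE nm; rewrite proj_proj nm. Qed.

Lemma decompN x N : (gbnd S x <= N)%N -> x = \sum_(n < N) proj S n x.
Proof.
move=> le; rewrite {1}(gbnd_sum S x) (big_ord_widen _ (fun n => proj S n x) le).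
rewrite big_mkcond /=; apply: eq_bigr => i _.
by case: ifP => // /negbT; rewrite -leqNgt => /gbnd_zero ->.
Qed.

Lemma lin_decomp f x N : lin_fun f -> (gbnd S x <= N)%N ->
  f x = \sum_(n < N) f (proj S n x).
Proof. by move=> lf le; rewrite {1}(decompN le) lin_sum. Qed.

Lemma lin_ext f g : lin_fun f -> lin_fun g ->
  (forall n x, f (proj S n x) = g (proj S n x)) -> forall x, f x = g x.
Proof.
move=> lf lg e x; rewrite (lin_decomp lf (leqnn (gbnd S x))) (lin_decomp lg (leqnn (gbnd S x))).
by apply: eq_bigr => i _; rewrite e.
Qed.

Lemma cou_proj0 x : cou S (proj S 0 x) = cou S x.
Proof.
rewrite [RHS](lin_decomp lin_cou (leqnSn (gbnd S x))) big_ord_recl /= big1 ?addr0 //.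
by move=> i _; rewrite cou_graded.
Qed.

End Basics.

Section Conv.
Variables (k : fieldType) (H : algType k) (S : gc_hopf H).
Implicit Types (f g h : H -> k).
Local Notation cv := (conv S).
Local Notation cou := (cou S).
Local Notation proj := (proj S).

Definition van n f := forall i x, (i < n)%N -> f (proj i x) = 0.

Lemma conv_addl f g h : cv (fun x => f x + g x) h = fun x => cv f h x + cv g h x.
Proof.
apply: functional_extensionality => x; rewrite /conv /tens -big_split /=.
by apply: eq_bigr => p _; rewrite mulrDl.
Qed.

Lemma conv_subl f g h : cv (fun x => f x - g x) h = fun x => cv f h x - cv g h x.
Proof.
apply: functional_extensionality => x; rewrite /conv /tens -sumrB /=.
by apply: eq_bigr => p _; rewrite mulrBl.
Qed.

Lemma conv_addr f g h : cv h (fun x => f x + g x) = fun x => cv h f x + cv h g x.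
Proof.
apply: functional_extensionality => x; rewrite /conv /tens -big_split /=.
by apply: eq_bigr => p _; rewrite mulrDr.
Qed.

Lemma conv_subr f g h : cv h (fun x => f x - g x) = fun x => cv h f x - cv h g x.
Proof.
apply: functional_extensionality => x; rewrite /conv /tens -sumrB /=.
by apply: eq_bigr => p _; rewrite mulrBr.
Qed.

Lemma conv_lin f g : lin_fun f -> lin_fun g -> lin_fun (cv f g).
Proof. exact: cop_lin. Qed.

Lemma conv_couL f : lin_fun f -> cv cou f = f.
Proof.
move=> lf; apply: functional_extensionality => x.
by rewrite -{2}(cou_l S x) lin_sum //; apply: eq_bigr => p _; rewrite linZ.
Qed.

Lemma conv_couR f : lin_fun f -> cv f cou = f.
Proof.
move=> lf; apply: functional_extensionality => x.
rewrite -{2}(cou_r S x) lin_sum //; apply: eq_bigr => p _; rewrite linZ //.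
exact: mulrC.
Qed.

Lemma conv_assoc f g h : lin_fun f -> lin_fun g -> lin_fun h ->
  cv (cv f g) h = cv f (cv g h).
Proof.
move=> lf lg lh; apply: functional_extensionality => x.
exact: coassoc.
Qed.

Lemma van_le n m f : (m <= n)%N -> van n f -> van m f.
Proof. by move=> le v i x lt; apply: v; apply: leq_trans le. Qed.

Lemma van0 f : van 0 f.
Proof. by []. Qed.

Lemma van_add n f g : van n f -> van n g -> van n (fun x => f x + g x).
Proof. by move=> vf vg i x lt; rewrite vf // vg // addr0. Qed.

Lemma van_sub n f g : van n f -> van n g -> van n (fun x => f x - g x).
Proof. by move=> vf vg i x lt; rewrite vf // vg // subr0. Qed.

Lemma van_conv n m f g : lin_fun f -> lin_fun g -> van n f -> van m g ->
  van (n + m) (cv f g).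
Proof.
move=> lf lg vf vg i x lt; rewrite /conv (cop_graded _ _ _ lf lg).
apply: big1 => [[a ha]] _ /=; rewrite /tens.
case: (ltnP a n) => han.
  by apply: big1 => p _; rewrite /= vf // mul0r.
apply: big1 => p _; rewrite /= vg ?mulr0 //; lia.
Qed.

End Conv.

Section Key.
Variables (k : fieldType) (H : algType k) (S : gc_hopf H).
Implicit Types (f g h : H -> k).
Local Notation cv := (conv S).
Local Notation cou := (cou S).
Local Notation proj := (proj S).
Local Notation van := (van S).

Definition r0 f := van 1 (fun x => f x - cou x).
Definition Phi psi R := cv (cv R psi) R.

Lemma fo1 n D A B : lin_fun D -> van n D -> lin_fun A -> lin_fun B -> r0 A -> r0 B ->
  van n.+1 (fun x => cv (cv D A) B x - D x).
Proof.
move=> lD vD lA lB rA rB.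
have -> : (fun x => cv (cv D A) B x - D x) =
   (fun x => cv (cv D (fun y => A y - cou y)) B x + cv D (fun y => B y - cou y) x).
  apply: functional_extensionality => x.
  by rewrite !conv_subr conv_couR // conv_subl /=; ring.
have lAc : lin_fun (fun y => A y - cou y) by apply: lin_sub => //; exact: lin_cou.
have lBc : lin_fun (fun y => B y - cou y) by apply: lin_sub => //; exact: lin_cou.
apply: van_add.
  rewrite -[n.+1]addn0; apply: van_conv => //; first exact: conv_lin.
  by rewrite -addn1; apply: van_conv.
by rewrite -addn1; apply: van_conv.
Qed.

Lemma fo2 n D A B : lin_fun D -> van n D -> lin_fun A -> lin_fun B -> r0 A -> r0 B ->
  van n.+1 (fun x => cv (cv A B) D x - D x).
Proof.
move=> lD vD lA lB rA rB.
have -> : (fun x => cv (cv A B) D x - D x) =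
   (fun x => cv (cv (fun y => A y - cou y) B) D x + cv (fun y => B y - cou y) D x).
  apply: functional_extensionality => x.
  by rewrite !conv_subl !conv_couL //; ring.
have lAc : lin_fun (fun y => A y - cou y) by apply: lin_sub => //; exact: lin_cou.
have lBc : lin_fun (fun y => B y - cou y) by apply: lin_sub => //; exact: lin_cou.
apply: van_add.
  apply: (@van_le _ _ _ (1 + 0 + n)); first lia.
  apply: van_conv => //; first exact: conv_lin.
  by apply: van_conv => //; exact: van0.
by rewrite -add1n; apply: van_conv.
Qed.

Lemma key n psi R E : lin_fun psi -> r0 psi -> lin_fun R -> r0 R -> lin_fun E ->
  van n E -> (0 < n)%N ->
  van n.+1 (fun x => Phi psi (fun y => R y + E y) x - Phi psi R x - (E x + E x)).
Proof.
move=> lpsi rpsi lR rR lE vE n0.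
have -> : (fun x => Phi psi (fun y => R y + E y) x - Phi psi R x - (E x + E x)) =
  (fun x => (cv (cv R psi) E x - E x) + (cv (cv E psi) R x - E x) + cv (cv E psi) E x).
  apply: functional_extensionality => x.
  by rewrite /Phi !conv_addl !conv_addr /=; ring.
apply: van_add; first apply: van_add.
- exact: fo2.
- exact: fo1.
- apply: (@van_le _ _ _ (n + 0 + n)); first lia.
  apply: van_conv => //; first exact: conv_lin.
  by apply: van_conv => //; exact: van0.
Qed.

End Key.

Section Exist.
Variables (k : fieldType) (H : algType k) (S : gc_hopf H).
Implicit Types (f g h : H -> k).
Local Notation cv := (conv S).
Local Notation cou := (cou S).
Local Notation proj := (proj S).
Local Notation van := (van S).
Local Notation r0 := (r0 S).
Local Notation Phi := (Phi S).

Lemma van_ext n f g : (forall x, f x = g x) -> van n f -> van n g.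
Proof. by move=> e v i x lt; rewrite -e v. Qed.

Lemma r0P f : restr0_is_cou S f <-> r0 f.
Proof.
split=> [h i x|h x]; first by case: i => // _; rewrite h subrr.
by apply/eqP; rewrite -subr_eq0; apply/eqP; apply: (h 0%N).
Qed.

Lemma r0_cou : r0 cou.
Proof. by move=> i x _; rewrite subrr. Qed.

Lemma lin_scar f c : lin_fun f -> lin_fun (fun x => f x * c).
Proof. by move=> lf a x y; rewrite lf; ring. Qed.

Lemma Phi_lin psi R : lin_fun psi -> lin_fun R -> lin_fun (Phi psi R).
Proof. by move=> lp lR; apply: conv_lin => //; apply: conv_lin. Qed.

Lemma Phi_congr n psi R R' : lin_fun psi -> lin_fun R -> lin_fun R' ->
  van n (fun x => R' x - R x) -> van n (fun x => Phi psi R' x - Phi psi R x).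
Proof.
move=> lp lR lR' vE.
set E := fun x => R' x - R x.
have lE : lin_fun E by apply: lin_sub.
have -> : R' = (fun x => R x + E x).
  by apply: functional_extensionality => x; rewrite /E; ring.
have -> : (fun x => Phi psi (fun x => R x + E x) x - Phi psi R x) =
  (fun x => cv (cv R psi) E x + cv (cv E psi) R x + cv (cv E psi) E x).
  apply: functional_extensionality => x.
  by rewrite /Phi !conv_addl !conv_addr /=; ring.
apply: van_add; first apply: van_add.
- by rewrite -[n]add0n; apply: van_conv => //; exact: conv_lin.
- rewrite -[n]addn0; apply: van_conv => //; first exact: conv_lin.
  by rewrite -[n]addn0; apply: van_conv => //.
- apply: (@van_le _ _ _ (n + 0 + n)); first lia.
  apply: van_conv => //; first exact: conv_lin.
  by apply: van_conv => //.
Qed.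

Lemma two_half (c : k) : (2%:R : k) != 0 -> c = 0 -> c / 2%:R + c / 2%:R = c.
Proof. by move=> _ ->; rewrite mul0r addr0. Qed.

Lemma uniq1 (char2 : (2%:R : k) != 0) psi R R' : lin_fun psi -> r0 psi ->
  lin_fun R -> r0 R -> lin_fun R' -> r0 R' ->
  (forall x, Phi psi R x = Phi psi R' x) -> forall x, R x = R' x.
Proof.
move=> lp rp lR rR lR' rR' e.
set E := fun x => R' x - R x.
have lE : lin_fun E by apply: lin_sub.
have vE : forall n, van n.+1 E.
  elim=> [|n IH].
    move=> i x; case: i => // _; rewrite /E.
    have := rR 0%N x isT; have := rR' 0%N x isT => /eqP; rewrite subr_eq0 => /eqP ->.
    by move=> /eqP; rewrite subr_eq0 => /eqP ->; rewrite subrr.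
  have K := key lp rp lR rR lE IH isT.
  move=> i x; rewrite ltnS leq_eqVlt => /orP [/eqP ->|lt]; last exact: IH.
  have := K n.+1 x (ltnSn _).
  have -> : (fun y => R y + E y) = R'.
    by apply: functional_extensionality => y; rewrite /E; ring.
  rewrite e subrr sub0r => /eqP; rewrite oppr_eq0 -mulr2n -mulr_natl mulf_eq0.
  by rewrite (negbTE char2) /= => /eqP.
move=> x; apply/eqP; rewrite eq_sym -subr_eq0; apply/eqP.
apply: (lin_ext lE (@lin_zero _ _)) => n y.
exact: (vE n).
Qed.

Section Lim.
Variable T : nat -> H -> k.
Hypothesis hlin : forall n, lin_fun (T n).
Hypothesis hstep : forall n, van n.+1 (fun x => T n.+1 x - T n x).

Definition limT x := T (gbnd S x) x.

Lemma lim_stab x N : (gbnd S x <= N)%N -> T N x = T (gbnd S x) x.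
Proof.
set g := gbnd S x.
move=> /subnKC <-; elim: (N - g)%N => [|m IH]; first by rewrite addn0.
rewrite addnS -IH; apply/eqP; rewrite -subr_eq0; apply/eqP.
have ld : lin_fun (fun y => T (g + m).+1 y - T (g + m) y) by apply: lin_sub.
rewrite (lin_decomp ld (leqnn g)) /=; apply: big1 => i _.
by apply: hstep; have := ltn_ord i; lia.
Qed.

Lemma lim_lin : lin_fun limT.
Proof.
move=> a x y; rewrite /limT.
set N := maxn (gbnd S (a *: x + y)) (maxn (gbnd S x) (gbnd S y)).
rewrite -(@lim_stab (a *: x + y) N); last by rewrite leq_maxl.
rewrite -(@lim_stab x N); last by rewrite /N; lia.
by rewrite -(@lim_stab y N) ?hlin //; rewrite /N; lia.
Qed.

Lemma lim_proj i n x : (i <= n)%N -> limT (proj i x) = T n (proj i x).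
Proof.
move=> le.
have A m : T (n + m) (proj i x) = T n (proj i x).
  elim: m => [|m IH]; first by rewrite addn0.
  rewrite addnS -IH; apply/eqP; rewrite -subr_eq0; apply/eqP.
  have h : (i < (n + m).+1)%N by lia.
  exact: (@hstep (n + m)%N i x h).
rewrite /limT -(@lim_stab _ (maxn (gbnd S (proj i x)) n)) ?leq_maxl //.
by rewrite -(subnKC (leq_maxr (gbnd S (proj i x)) n)) A.
Qed.

End Lim.
End Exist.

Section Exist2.
Variables (k : fieldType) (H : algType k) (S : gc_hopf H).
Implicit Types (f g h : H -> k).
Local Notation cv := (conv S).
Local Notation cou := (cou S).
Local Notation proj := (proj S).
Local Notation van := (van S).
Local Notation r0 := (r0 S).
Local Notation Phi := (Phi S).

Variable char2 : (2%:R : k) != 0.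

Lemma half_add (c : k) : c / 2%:R + c / 2%:R = c.
Proof. by field. Qed.

Variables (phi psi : H -> k).
Hypotheses (lphi : lin_fun phi) (lpsi : lin_fun psi) (rphi : r0 phi) (rpsi : r0 psi).

Fixpoint Tseq (n : nat) : H -> k :=
  match n with
  | 0 => cou
  | m.+1 => fun x => Tseq m x + (phi (proj m.+1 x) - Phi psi (Tseq m) (proj m.+1 x)) / 2%:R
  end.

Definition Dseq m := fun x => (phi (proj m.+1 x) - Phi psi (Tseq m) (proj m.+1 x)) / 2%:R.

Lemma Dseq_props m : lin_fun (Tseq m) -> lin_fun (Dseq m) /\ van m.+1 (Dseq m).
Proof.
move=> lT; split.
  apply: lin_scar; apply: lin_sub; apply: lin_comp => //; try exact: proj_lin.
  exact: Phi_lin.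
move=> i x lt; rewrite /Dseq projO; last by rewrite neq_ltn lt orbT.
by rewrite (lin0 lphi) (lin0 (Phi_lin S lpsi lT)) subrr mul0r.
Qed.

Lemma Tseq_props n :
  [/\ lin_fun (Tseq n), r0 (Tseq n) & van n.+1 (fun x => phi x - Phi psi (Tseq n) x)].
Proof.
elim: n => [|m [lT rT vT]].
  split; [exact: lin_cou | exact: r0_cou |].
  rewrite /= /Phi conv_couL // conv_couR //.
  move=> i x; case: i => // _.
  have := @rphi 0%N x isT; have := @rpsi 0%N x isT => /eqP; rewrite subr_eq0 => /eqP ->.
  by move=> /eqP; rewrite subr_eq0 => /eqP ->; rewrite subrr.
have [lD vD] := Dseq_props lT.
have eT : Tseq m.+1 = fun x => Tseq m x + Dseq m x by [].
rewrite eT; split.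
- exact: lin_add.
- apply: (@van_ext _ _ _ _ (fun x => (Tseq m x - cou x) + Dseq m x)).
    by move=> x; ring.
  apply: van_add => //; apply: (van_le _ vD); done.
- have K := key lpsi rpsi lT rT lD vD (ltn0Sn m).
  move=> i x lt; case: (ltnP i m.+1) => hi.
    have := K i x lt; have := vT i x hi; have := vD i x hi => /= d0 v0.
    rewrite d0 addr0 subr0 => /eqP; rewrite subr_eq0 => /eqP ->; exact: v0.
  have -> : i = m.+1 by lia.
  have := K m.+1 x (ltnSn _); rewrite /= /Dseq projK half_add => k0.
  set a := phi (proj m.+1 x); set b := Phi psi (Tseq m) (proj m.+1 x).
  set c := Phi psi _ (proj m.+1 x).
  have -> : a - c = - (c - b - (a - b)) by ring.
  by rewrite k0 oppr0.
Qed.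

Lemma Tseq_step n : van n.+1 (fun x => Tseq n.+1 x - Tseq n x).
Proof.
have [lT _ _] := Tseq_props n; have [_ vD] := Dseq_props lT.
by apply: (van_ext _ vD) => x; rewrite /Dseq /=; ring.
Qed.

Definition rho0 := limT S Tseq.

Lemma rho0_props : [/\ lin_fun rho0, r0 rho0 & forall x, phi x = Phi psi rho0 x].
Proof.
have lT n : lin_fun (Tseq n) by have [] := Tseq_props n.
have lr : lin_fun rho0 by apply: lim_lin => //; exact: Tseq_step.
have lp n i x : (i <= n)%N -> rho0 (proj i x) = Tseq n (proj i x).
  by move=> le; apply: lim_proj => //; exact: Tseq_step.
split => //.
  move=> i x; case: i => // _; rewrite (lp 0%N) //= subrr //.
apply: (lin_ext (S:=S)) => //; first exact: Phi_lin.
move=> n x.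
have vE : van n.+1 (fun x => rho0 x - Tseq n x).
  by move=> i y lt; rewrite (lp n) ?subrr.
have c0 := Phi_congr lpsi (lT n) lr vE.
have c := c0 n x (ltnSn _).
have [_ _ vT] := Tseq_props n; have := vT n x (ltnSn _) => /= v.
move/eqP: c; rewrite subr_eq0 => /eqP ->.
by move/eqP: v; rewrite subr_eq0 => /eqP.
Qed.

End Exist2.

Section Inv.
Variables (k : fieldType) (H : algType k) (S : gc_hopf H).
Implicit Types (f g h : H -> k).
Local Notation cv := (conv S).
Local Notation cou := (cou S).
Local Notation proj := (proj S).
Local Notation van := (van S).
Local Notation r0 := (r0 S).

Section RInv.
Variable f : H -> k.
Hypotheses (lf : lin_fun f) (rf : r0 f).

Fixpoint Gseq (n : nat) : H -> k :=
  match n with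
  | 0 => cou
  | m.+1 => fun x => Gseq m x - cv f (Gseq m) (proj m.+1 x)
  end.

Definition GD m := fun x => - cv f (Gseq m) (proj m.+1 x).

Lemma GD_props m : lin_fun (Gseq m) -> lin_fun (GD m) /\ van m.+1 (GD m).
Proof.
move=> lG; split.
  move=> a x y; rewrite /GD (proj_lin S) (conv_lin S lf lG); ring.
move=> i x lt; rewrite /GD projO; last by rewrite neq_ltn lt orbT.
by rewrite (lin0 (conv_lin S lf lG)) oppr0.
Qed.

Lemma Gseq_props n :
  [/\ lin_fun (Gseq n), r0 (Gseq n) & van n.+1 (fun x => cv f (Gseq n) x - cou x)].
Proof.
elim: n => [|m [lG rG vG]].
  by split; [exact: lin_cou | exact: r0_cou | rewrite /= conv_couR].
have [lD vD] := GD_props lG.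
have eG : Gseq m.+1 = fun x => Gseq m x + GD m x by [].
rewrite eG; split.
- exact: lin_add.
- apply: (@van_ext _ _ _ _ (fun x => (Gseq m x - cou x) + GD m x)).
    by move=> x; ring.
  apply: van_add => //; apply: (van_le _ vD); done.
- rewrite conv_addr.
  have K : van m.+2 (fun x => cv (cv f cou) (GD m) x - GD m x).
    by apply: fo2 => //; [exact: lin_cou | exact: r0_cou].
  rewrite conv_couR // in K.
  have V : van (0 + m.+1) (cv f (GD m)) by apply: van_conv.
  move=> i x lt; case: (ltnP i m.+1) => hi.
    have := V i x hi; have := vG i x hi => /= a b.
    by rewrite addrAC a add0r.
  have -> : i = m.+1 by lia.
  have := K m.+1 x (ltnSn _); rewrite /= cou_graded // /GD projK subr0 => k0.
  rewrite -k0; ring.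
Qed.

Lemma Gseq_step n : van n.+1 (fun x => Gseq n.+1 x - Gseq n x).
Proof.
have [lG _ _] := Gseq_props n; have [_ vD] := GD_props lG.
by apply: (van_ext _ vD) => x; rewrite /GD /=; ring.
Qed.

Definition rinv := limT S Gseq.

Lemma rinv_props : [/\ lin_fun rinv, r0 rinv & cv f rinv = cou].
Proof.
have lG n : lin_fun (Gseq n) by have [] := Gseq_props n.
have lr : lin_fun rinv by apply: lim_lin => //; exact: Gseq_step.
have lp n i x : (i <= n)%N -> rinv (proj i x) = Gseq n (proj i x).
  by move=> le; apply: lim_proj => //; exact: Gseq_step.
split => //.
  move=> i x; case: i => // _; rewrite (lp 0%N) //= subrr //.
apply: functional_extensionality; apply: (lin_ext (S:=S)) => //.
  exact: conv_lin.
  exact: lin_cou.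
move=> n x.
have vE : van n.+1 (fun x => rinv x - Gseq n x).
  by move=> i y lt; rewrite (lp n) ?subrr.
have lE : lin_fun (fun x => rinv x - Gseq n x) by apply: lin_sub.
have c0 : van (0 + n.+1) (cv f (fun x => rinv x - Gseq n x)) by apply: van_conv.
have := c0 n x (ltnSn _); rewrite conv_subr /= => c.
have [_ _ vG] := Gseq_props n; have := vG n x (ltnSn _) => /= v.
move/eqP: c; rewrite subr_eq0 => /eqP ->.
by move/eqP: v; rewrite subr_eq0 => /eqP.
Qed.

End RInv.

Lemma inv_ex f : lin_fun f -> r0 f ->
  exists g, [/\ lin_fun g, r0 g, cv f g = cou & cv g f = cou].
Proof.
move=> lf rf; have [lg rg fg] := rinv_props lf rf.
set g := rinv f in lg rg fg *.
have [lh rh gh] := rinv_props lg rg.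
set h := rinv g in lh rh gh *.
have fh : f = h.
  by rewrite -(conv_couR S lf) -gh -conv_assoc // fg conv_couL.
by exists g; split => //; rewrite fh.
Qed.

End Inv.

Section Bar.
Variables (k : fieldType) (H : algType k) (S : gc_hopf H).
Implicit Types (f g h : H -> k).
Local Notation cv := (conv S).
Local Notation cou := (cou S).
Local Notation proj := (proj S).
Local Notation van := (van S).
Local Notation r0 := (r0 S).
Local Notation bar := (bar S).

Lemma bar_N f x N : lin_fun f -> (gbnd S x <= N)%N ->
  bar f x = \sum_(n < N) (-1) ^+ n * f (proj n x).
Proof.
move=> lf le; rewrite /bar (big_ord_widen _ (fun n => (-1) ^+ n * f (proj n x)) le).
rewrite big_mkcond /=; apply: eq_bigr => i _.
by case: ifP => // /negbT; rewrite -leqNgt => /gbnd_zero ->; rewrite lin0 // mulr0.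
Qed.

Lemma bar_lin f : lin_fun f -> lin_fun (bar f).
Proof.
move=> lf a x y.
set N := maxn (gbnd S (a *: x + y)) (maxn (gbnd S x) (gbnd S y)).
rewrite (@bar_N f (a *: x + y) N) //; last by rewrite leq_maxl.
rewrite (@bar_N f x N) //; last by rewrite /N; lia.
rewrite (@bar_N f y N) //; last by rewrite /N; lia.
rewrite mulr_sumr -big_split /=; apply: eq_bigr => i _.
rewrite (proj_lin S) lf; ring.
Qed.

Lemma bar_proj f i x : lin_fun f -> bar f (proj i x) = (-1) ^+ i * f (proj i x).
Proof.
move=> lf.
have hi : (i < maxn (gbnd S (proj i x)) i.+1)%N by rewrite leq_max ltnSn orbT.
rewrite (@bar_N f _ (maxn (gbnd S (proj i x)) i.+1)) ?leq_maxl //.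
rewrite (bigD1 (Ordinal hi)) //= projK big1 ?addr0 // => j /eqP nj.
rewrite projO ?lin0 ?mulr0 //; apply/eqP => e; apply: nj; exact: val_inj.
Qed.

Lemma sign_sq n : (-1) ^+ n * (-1) ^+ n = 1 :> k.
Proof. by rewrite -exprMn mulrNN mulr1 expr1n. Qed.

Lemma bar_bar f : lin_fun f -> forall x, bar (bar f) x = f x.
Proof.
move=> lf; apply: (lin_ext (S:=S)) => //; first by do 2 apply: bar_lin.
have lb := bar_lin lf.
by move=> n x; rewrite !bar_proj // mulrA sign_sq mul1r.
Qed.

Lemma bar_cou x : bar cou x = cou x.
Proof.
have lc : lin_fun cou := cou_lin S.
apply: (lin_ext (S:=S)) x => //; first exact: bar_lin.
move=> n x; rewrite bar_proj //.
by case: n => [|n]; rewrite ?expr0 ?mul1r // cou_graded // mulr0.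
Qed.

Lemma bar_r0 f : lin_fun f -> r0 f -> r0 (bar f).
Proof.
move=> lf rf i x; case: i => // _; rewrite bar_proj // expr0 mul1r.
exact: (rf 0%N).
Qed.

Lemma bar_conv f g : lin_fun f -> lin_fun g ->
  forall x, bar (cv f g) x = cv (bar f) (bar g) x.
Proof.
move=> lf lg; apply: (lin_ext (S:=S)).
- by apply: bar_lin; apply: conv_lin.
- by apply: conv_lin; apply: bar_lin.
move=> n x; rewrite bar_proj; last exact: conv_lin.
rewrite /conv (cop_graded _ _ _ lf lg) (cop_graded _ _ _ (bar_lin lf) (bar_lin lg)).
rewrite mulr_sumr; apply: eq_bigr => [[i hi]] _ /=; rewrite /tens mulr_sumr.
apply: eq_bigr => p _ /=; rewrite !bar_proj //.
have -> : ((-1) ^+ n = (-1) ^+ i * (-1) ^+ (n - i) :> k).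
  by rewrite -exprD subnKC // -ltnS.
ring.
Qed.

End Bar.

Section Pairs.
Variables (k : fieldType) (H : algType k) (S : gc_hopf H).
Implicit Types (F G : H -> H -> k).
Local Notation cou := (cou S).
Local Notation proj := (proj S).
Local Notation cop := (cop S).

Definition conv2 F G := fun x y =>
  \sum_(p <- cop x) \sum_(q <- cop y) F p.1 q.1 * G p.2 q.2.
Definition bil F := (forall y, lin_fun (fun x => F x y)) /\ (forall x, lin_fun (F x)).
Definition van2 n F := forall i j x y, (i + j < n)%N -> F (proj i x) (proj j y) = 0.
Definition cou2 := fun x y => cou x * cou y.
Definition r02 F := van2 1 (fun x y => F x y - cou2 x y).
Definition Phi2 Psi R := conv2 (conv2 R Psi) R.

Lemma lin_eqext (f g : H -> k) : (forall x, f x = g x) -> lin_fun f -> lin_fun g.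
Proof. by move=> e lf a x y; rewrite -!e lf. Qed.

Lemma conv2_addl F G K : conv2 (fun x y => F x y + G x y) K =
  fun x y => conv2 F K x y + conv2 G K x y.
Proof.
do 2 (apply: functional_extensionality => ?); rewrite /conv2 -big_split /=.
by apply: eq_bigr => p _; rewrite -big_split; apply: eq_bigr => q _; rewrite mulrDl.
Qed.

Lemma conv2_subl F G K : conv2 (fun x y => F x y - G x y) K =
  fun x y => conv2 F K x y - conv2 G K x y.
Proof.
do 2 (apply: functional_extensionality => ?); rewrite /conv2 -sumrB /=.
by apply: eq_bigr => p _; rewrite -sumrB; apply: eq_bigr => q _; rewrite mulrBl.
Qed.

Lemma conv2_addr F G K : conv2 K (fun x y => F x y + G x y) =
  fun x y => conv2 K F x y + conv2 K G x y.
Proof.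
do 2 (apply: functional_extensionality => ?); rewrite /conv2 -big_split /=.
by apply: eq_bigr => p _; rewrite -big_split; apply: eq_bigr => q _; rewrite mulrDr.
Qed.

Lemma conv2_subr F G K : conv2 K (fun x y => F x y - G x y) =
  fun x y => conv2 K F x y - conv2 K G x y.
Proof.
do 2 (apply: functional_extensionality => ?); rewrite /conv2 -sumrB /=.
by apply: eq_bigr => p _; rewrite -sumrB; apply: eq_bigr => q _; rewrite mulrBr.
Qed.

Lemma conv2_swap F G x y : conv2 F G x y =
  \sum_(q <- cop y) tens (fun a => F a q.1) (fun b => G b q.2) (cop x).
Proof. by rewrite /conv2 /tens exchange_big. Qed.

Lemma bil_conv2 F G : bil F -> bil G -> bil (conv2 F G).
Proof.
move=> [F1 F2] [G1 G2]; split=> [y|x].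
  apply: (@lin_eqext (fun x => \sum_(q <- cop y)
       tens (fun a => F a q.1) (fun b => G b q.2) (cop x))).
    by move=> x; rewrite conv2_swap.
  by apply: lin_bsum => q; apply: cop_lin.
apply: (@lin_eqext (fun y => \sum_(p <- cop x) tens (F p.1) (G p.2) (cop y))) => //.
by apply: lin_bsum => p; apply: cop_lin.
Qed.

Lemma bil_add F G : bil F -> bil G -> bil (fun x y => F x y + G x y).
Proof. by move=> [F1 F2] [G1 G2]; split=> ?; apply: lin_add. Qed.

Lemma bil_sub F G : bil F -> bil G -> bil (fun x y => F x y - G x y).
Proof. by move=> [F1 F2] [G1 G2]; split=> ?; apply: lin_sub. Qed.

Lemma bil_cou2 : bil cou2.
Proof.
split=> [y|x]; first by apply: (lin_scar _ (cou_lin S)).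
exact: (lin_scal _ (cou_lin S)).
Qed.

Lemma bilL_sum F y I (r : seq I) (G : I -> H) : bil F ->
  F (\sum_(i <- r) G i) y = \sum_(i <- r) F (G i) y.
Proof. by move=> [F1 _]; exact: (lin_sum (f := fun x => F x y)). Qed.

Lemma bilR_sum F x I (r : seq I) (G : I -> H) : bil F ->
  F x (\sum_(i <- r) G i) = \sum_(i <- r) F x (G i).
Proof. by move=> [_ F2]; exact: (lin_sum (f := F x)). Qed.

Lemma bilL_Z F y a x : bil F -> F (a *: x) y = a * F x y.
Proof. by move=> [F1 _]; exact: (linZ (f := fun x => F x y)). Qed.

Lemma bilR_Z F x a y : bil F -> F x (a *: y) = a * F x y.
Proof. by move=> [_ F2]; exact: (linZ (f := F x)). Qed.

Lemma conv2_cou2R F : bil F -> conv2 F cou2 = F.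
Proof.
move=> bF; apply: functional_extensionality => x; apply: functional_extensionality => y.
rewrite /conv2 /cou2 -[in RHS](cou_r S x) bilL_sum //.
apply: eq_bigr => p _; rewrite bilL_Z // -[in RHS](cou_r S y) bilR_sum // mulr_sumr.
by apply: eq_bigr => q _; rewrite bilR_Z //; ring.
Qed.

Lemma conv2_cou2L F : bil F -> conv2 cou2 F = F.
Proof.
move=> bF; apply: functional_extensionality => x; apply: functional_extensionality => y.
rewrite /conv2 /cou2 -[in RHS](cou_l S x) bilL_sum //.
apply: eq_bigr => p _; rewrite bilL_Z // -[in RHS](cou_l S y) bilR_sum // mulr_sumr.
by apply: eq_bigr => q _; rewrite bilR_Z //; ring.
Qed.

Lemma van2_le n m F : (m <= n)%N -> van2 n F -> van2 m F.
Proof. by move=> le v i j x y lt; apply: v; apply: leq_trans le. Qed.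

Lemma van2_add n F G : van2 n F -> van2 n G -> van2 n (fun x y => F x y + G x y).
Proof. by move=> vf vg i j x y lt; rewrite vf // vg // addr0. Qed.

Lemma van2_conv n m F G : bil F -> bil G -> van2 n F -> van2 m G ->
  van2 (n + m) (conv2 F G).
Proof.
move=> bF bG vF vG i j x y lt.
have [F1 F2] := bF; have [G1 G2] := bG.
rewrite conv2_swap.
rewrite (eq_bigr _ (fun q _ => cop_graded S i x (F1 q.1) (G1 q.2))).
rewrite exchange_big /=; apply: big1 => [[a ha]] _ /=.
rewrite /tens exchange_big /=; apply: big1 => p _.
have -> : \sum_(q <- cop (proj j y)) F (proj a p.1) q.1 * G (proj (i - a) p.2) q.2 =
   tens (F (proj a p.1)) (G (proj (i - a) p.2)) (cop (proj j y)) by [].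
rewrite (cop_graded S j y (F2 _) (G2 _)); apply: big1 => [[b hb]] _ /=.
rewrite /tens; apply: big1 => q _ /=.
case: (ltnP (a + b) n) => hab; first by rewrite vF // mul0r.
by rewrite vG ?mulr0 //; lia.
Qed.

Lemma ext2 F G : bil F -> bil G ->
  (forall i j x y, F (proj i x) (proj j y) = G (proj i x) (proj j y)) ->
  forall x y, F x y = G x y.
Proof.
move=> [F1 F2] [G1 G2] e x y.
apply: (lin_ext (S:=S) (F1 y) (G1 y)) => i x'.
exact: (lin_ext (S:=S) (F2 _) (G2 _)).
Qed.

Lemma fo1_2 n D A B : bil D -> van2 n D -> bil A -> bil B -> r02 A -> r02 B ->
  van2 n.+1 (fun x y => conv2 (conv2 D A) B x y - D x y).
Proof.
move=> lD vD lA lB rA rB.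
have -> : (fun x y => conv2 (conv2 D A) B x y - D x y) =
   (fun x y => conv2 (conv2 D (fun x y => A x y - cou2 x y)) B x y +
               conv2 D (fun x y => B x y - cou2 x y) x y).
  apply: functional_extensionality => x; apply: functional_extensionality => y.
  by rewrite !conv2_subr conv2_cou2R // conv2_subl /=; ring.
have lAc : bil (fun x y => A x y - cou2 x y) by apply: bil_sub => //; exact: bil_cou2.
have lBc : bil (fun x y => B x y - cou2 x y) by apply: bil_sub => //; exact: bil_cou2.
apply: van2_add.
  rewrite -[n.+1]addn0; apply: van2_conv => //; first exact: bil_conv2.
  by rewrite -addn1; apply: van2_conv.
by rewrite -addn1; apply: van2_conv.
Qed.

Lemma fo2_2 n D A B : bil D -> van2 n D -> bil A -> bil B -> r02 A -> r02 B ->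
  van2 n.+1 (fun x y => conv2 (conv2 A B) D x y - D x y).
Proof.
move=> lD vD lA lB rA rB.
have -> : (fun x y => conv2 (conv2 A B) D x y - D x y) =
   (fun x y => conv2 (conv2 (fun x y => A x y - cou2 x y) B) D x y +
               conv2 (fun x y => B x y - cou2 x y) D x y).
  apply: functional_extensionality => x; apply: functional_extensionality => y.
  by rewrite !conv2_subl !conv2_cou2L //; ring.
have lAc : bil (fun x y => A x y - cou2 x y) by apply: bil_sub => //; exact: bil_cou2.
have lBc : bil (fun x y => B x y - cou2 x y) by apply: bil_sub => //; exact: bil_cou2.
apply: van2_add.
  apply: (@van2_le (1 + 0 + n)); first lia.
  apply: van2_conv => //; first exact: bil_conv2.
  by apply: van2_conv.
by rewrite -add1n; apply: van2_conv.
Qed.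

Lemma key2 n Psi R E : bil Psi -> r02 Psi -> bil R -> r02 R -> bil E ->
  van2 n E -> (0 < n)%N ->
  van2 n.+1 (fun x y => Phi2 Psi (fun x y => R x y + E x y) x y - Phi2 Psi R x y
                         - (E x y + E x y)).
Proof.
move=> lpsi rpsi lR rR lE vE n0.
have -> : (fun x y => Phi2 Psi (fun x y => R x y + E x y) x y - Phi2 Psi R x y
                         - (E x y + E x y)) =
  (fun x y => (conv2 (conv2 R Psi) E x y - E x y) + (conv2 (conv2 E Psi) R x y - E x y)
              + conv2 (conv2 E Psi) E x y).
  apply: functional_extensionality => x; apply: functional_extensionality => y.
  by rewrite /Phi2 !conv2_addl !conv2_addr /=; ring.
apply: van2_add; first apply: van2_add.
- exact: fo2_2.
- exact: fo1_2.
- apply: (@van2_le (n + 0 + n)); first lia.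
  apply: van2_conv => //; first exact: bil_conv2.
  by apply: van2_conv.
Qed.

Lemma uniq2 (char2 : (2%:R : k) != 0) Psi R R' : bil Psi -> r02 Psi ->
  bil R -> r02 R -> bil R' -> r02 R' ->
  (forall x y, Phi2 Psi R x y = Phi2 Psi R' x y) -> forall x y, R x y = R' x y.
Proof.
move=> lp rp lR rR lR' rR' e.
set E := fun x y => R' x y - R x y.
have lE : bil E by apply: bil_sub.
have vE : forall n, van2 n.+1 E.
  elim=> [|n IH].
    move=> i j x y lt; have [-> ->] : i = 0%N /\ j = 0%N by lia.
    rewrite /E.
    have := rR 0%N 0%N x y isT; have := rR' 0%N 0%N x y isT => /eqP.
    rewrite subr_eq0 => /eqP ->.
    by move=> /eqP; rewrite subr_eq0 => /eqP ->; rewrite subrr.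
  have K := key2 lp rp lR rR lE IH isT.
  move=> i j x y; rewrite ltnS leq_eqVlt => /orP [/eqP h|lt]; last exact: IH.
  have := K i j x y; rewrite h => /(_ (ltnSn _)).
  have -> : (fun x y => R x y + E x y) = R'.
    by apply: functional_extensionality => x'; apply: functional_extensionality => y';
       rewrite /E; ring.
  rewrite e subrr sub0r => /eqP; rewrite oppr_eq0 -mulr2n -mulr_natl mulf_eq0.
  by rewrite (negbTE char2) /= => /eqP.
move=> x y; apply/eqP; rewrite eq_sym -subr_eq0; apply/eqP.
have b0 : bil (fun _ _ : H => 0 : k) by split=> ?; exact: lin_zero.
apply: (@ext2 E (fun _ _ => 0) lE b0) => i j x' y'.
exact: (vE (i + j)%N).
Qed.

End Pairs.

Section Main.
Variables (k : fieldType) (H : algType k) (S : gc_hopf H).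
Implicit Types (f g h : H -> k).
Local Notation cv := (conv S).
Local Notation cou := (cou S).
Local Notation proj := (proj S).
Local Notation van := (van S).
Local Notation r0 := (r0 S).
Local Notation bar := (bar S).
Local Notation Phi := (Phi S).

Variable char2 : (2%:R : k) != 0.
Variables (phi psi rho : H -> k).
Hypotheses (lphi : lin_fun phi) (lpsi : lin_fun psi) (rphi : r0 phi) (rpsi : r0 psi).
Hypotheses (lr : lin_fun rho) (rr : r0 rho) (pe : phi = cv (cv rho psi) rho).

Ltac lins := repeat first [assumption | apply: conv_lin | apply: bar_lin | exact: cou_lin].

Lemma bar_convF f g : lin_fun f -> lin_fun g -> bar (cv f g) = cv (bar f) (bar g).
Proof. by move=> lf lg; apply: functional_extensionality; apply: bar_conv. Qed.

Lemma bar_barF f : lin_fun f -> bar (bar f) = f.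
Proof. by move=> lf; apply: functional_extensionality; apply: bar_bar. Qed.

Lemma bar_couF : bar cou = cou.
Proof. by apply: functional_extensionality; apply: bar_cou. Qed.

Lemma bar_Phi : bar phi = cv (cv (bar rho) (bar psi)) (bar rho).
Proof. by rewrite pe !bar_convF //; lins. Qed.

Section WithInv.
Variable r' : H -> k.
Hypotheses (lr' : lin_fun r') (rr' : r0 r') (eir : cv rho r' = cou) (eri : cv r' rho = cou).

Lemma f2 : cv (cv r' phi) r' = psi.
Proof.
rewrite pe.
rewrite -(conv_assoc S lr' _ lr); lins.
rewrite -(conv_assoc S lr' lr lpsi) eri conv_couL //.
by rewrite (conv_assoc S lpsi lr lr') eir conv_couR.
Qed.

End WithInv.

Lemma part_b : character phi -> character psi -> character rho.
Proof.
move=> [_ phi1 phiM] [_ psi1 psiM].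
have rho1 : rho 1 = 1.
  have := @rr 0%N 1 isT; rewrite proj0_one cou_one => /eqP; rewrite subr_eq0.
  by move/eqP.
split => // x y.
set R := fun x y => rho (x * y).
set R' := fun x y => rho x * rho y.
set Psi := fun x y => psi x * psi y.
have bR : bil R.
  split=> [y'|x'] a u v; rewrite /R.
    by rewrite mulrDl -scalerAl lr.
  by rewrite mulrDr -scalerAr lr.
have bR' : bil R' by split=> ?; [apply: lin_scar | apply: lin_scal].
have bPsi : bil Psi by split=> ?; [apply: lin_scar | apply: lin_scal].
have r0f f : lin_fun f -> r0 f -> forall x, f (proj 0 x) = cou (proj 0 x).
  by move=> lf rf z; apply/eqP; rewrite -subr_eq0; apply/eqP; exact: (@rf 0%N).
have r2 f : lin_fun f -> r0 f -> r02 S (fun x y => f x * f y).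
  move=> lf rf i j u v lt; have [-> ->] : i = 0%N /\ j = 0%N by lia.
  by rewrite /cou2 !r0f // subrr.
have rR : r02 S R.
  move=> i j u v lt; have [-> ->] : i = 0%N /\ j = 0%N by lia.
  have [c ->] := proj0_scal S u; have [d ->] := proj0_scal S v.
  rewrite /R /cou2 -scalerAl -scalerAr mul1r scalerA (linZ lr) !(linZ (cou_lin S)).
  by rewrite rho1 cou_one; ring.
have ePsi : Psi = fun x y => psi (x * y).
  by apply: functional_extensionality => u; apply: functional_extensionality => v;
     rewrite /Psi psiM.
have conv2_m f g : lin_fun f -> lin_fun g ->
    conv2 S (fun x y => f (x * y)) (fun x y => g (x * y)) = fun x y => cv f g (x * y).
  move=> lf lg; apply: functional_extensionality => u; apply: functional_extensionality => v.
  by rewrite /conv (cop_mul S _ _ lf lg).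
have conv2_t f f' g g' :
    conv2 S (fun x y => f x * f' y) (fun x y => g x * g' y) = fun x y => cv f g x * cv f' g' y.
  apply: functional_extensionality => u; apply: functional_extensionality => v.
  rewrite /conv2 /conv /tens big_distrl; apply: eq_bigr => p _ /=.
  rewrite big_distrr; apply: eq_bigr => q _ /=; ring.
have := @uniq2 _ _ S char2 Psi R R' bPsi (r2 _ lpsi rpsi) bR rR bR' (r2 _ lr rr).
apply.
move=> u v; rewrite /Phi2.
have -> : conv2 S (conv2 S R Psi) R = fun x y => phi (x * y).
  by rewrite ePsi /R conv2_m // conv2_m ?pe //; lins.
rewrite /R' /Psi conv2_t conv2_t -pe.
exact: phiM.
Qed.

Lemma part_even :
  (forall x, cv psi (bar phi) x = cou x /\ cv (bar phi) psi x = cou x) ->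
  forall x, bar rho x = rho x.
Proof.
move=> hinv.
have e1 : cv psi (bar phi) = cou.
  by apply: functional_extensionality => x; case: (hinv x).
have e2 : cv (bar phi) psi = cou.
  by apply: functional_extensionality => x; case: (hinv x).
have [r' [lr' rr' eir eri]] := inv_ex lr rr.
have F2 := f2 lr' eir eri.
have lbphi := bar_lin S lphi; have lbpsi := bar_lin S lpsi.
have f1 : cv phi (bar psi) = cou.
  by rewrite -bar_couF -e2 bar_convF // bar_barF.
set X := cv (cv rho (bar psi)) rho.
have lX : lin_fun X by rewrite /X; lins.
have f3 : cv psi X = cou.
  rewrite -F2 /X.
  rewrite (conv_assoc S _ lr' _); lins.
  rewrite -(conv_assoc S lr' _ lr); lins.
  rewrite -(conv_assoc S lr' lr lbpsi) eri conv_couL //.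
  rewrite (conv_assoc S lr' lphi _); lins.
  by rewrite -(conv_assoc S lphi lbpsi lr) f1 conv_couL // eri.
have f4 : X = bar phi.
  by rewrite -[bar phi](conv_couR S lbphi) -f3 -(conv_assoc S lbphi lpsi lX) e2 conv_couL.
have := uniq1 char2 lbpsi (bar_r0 lpsi rpsi) (bar_lin S lr) (bar_r0 lr rr) lr rr.
apply => x.
by rewrite /Phi -bar_Phi -/X f4.
Qed.

Lemma part_odd : (forall x, bar phi x = psi x) ->
  forall x, cv rho (bar rho) x = cou x /\ cv (bar rho) rho x = cou x.
Proof.
move=> hb.
have bphi : bar phi = psi by apply: functional_extensionality.
have bpsi : bar psi = phi by rewrite -bphi bar_barF.
have [r' [lr' rr' eir eri]] := inv_ex lr rr.
have F2 := f2 lr' eir eri.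
have e : forall x, bar rho x = r' x.
  apply: (uniq1 char2 lphi rphi (bar_lin S lr) (bar_r0 lr rr) lr' rr') => x.
  by rewrite /Phi -{1}bpsi -bar_Phi bphi F2.
have -> : bar rho = r' by apply: functional_extensionality.
by move=> x; rewrite eir eri.
Qed.

End Main.

Theorem proposition1p4 (k : fieldType) (H : algType k) (S : gc_hopf H)
    (char2 : (2%:R : k) != 0)
    (phi psi : H -> k)
    (lphi : lin_fun phi) (lpsi : lin_fun psi)
    (phi0 : restr0_is_cou S phi) (psi0 : restr0_is_cou S psi) :
  exists rho : H -> k,
    (* (a) existence *)
    lin_fun rho /\ restr0_is_cou S rho /\
    (forall x, phi x = conv S (conv S rho psi) rho x) /\
        (* (a) uniqueness *)
        (forall rho' : H -> k, lin_fun rho' -> restr0_is_cou S rho' ->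
           (forall x, phi x = conv S (conv S rho' psi) rho' x) ->
           forall x, rho' x = rho x) /\
        (* (b) *)
        (character phi -> character psi -> character rho) /\
        (* (c) even case *)
        (conv_inv S psi (bar S phi) -> even_fun S rho) /\
        (* (c) odd case *)
        ((forall x, bar S phi x = psi x) -> odd_fun S rho).
Proof.
have rphi : r0 S phi by apply/r0P.
have rpsi : r0 S psi by apply/r0P.
have [lr rr er] := rho0_props char2 lphi lpsi rphi rpsi.
have pe : phi = conv S (conv S (rho0 S phi psi) psi) (rho0 S phi psi).
  by apply: functional_extensionality.
exists (rho0 S phi psi).
split => //; split; first by apply/r0P.
split => //; split.
  move=> rho' lr' rr' e' x.
  have rr'' : r0 S rho' by apply/r0P.
  apply: (uniq1 char2 lpsi rpsi lr' rr'' lr rr) => y.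
  by apply: esym; rewrite -er; exact: e'.
split; first exact: (part_b char2 lpsi rpsi lr rr pe).
split; first exact: (part_even char2 lphi lpsi rpsi lr rr pe).
exact: (part_odd char2 lphi lpsi rphi lr rr pe).
Qed.
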